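(* Let $\alpha,\tau\in C^{\log}_{\mathrm{loc}}$ with $\tau^-\ge0$, let $p,q\in\mathcal{P}^{\log}_0$ with $0<q^+<\infty$. There exists $c>0$ such that for all $\lambda\in\mathfrak{b}^{\alpha(\cdot),\tau(\cdot)}_{p(\cdot),q(\cdot)}$, all $v\in\mathbb{N}_0$, $m\in\mathbb{Z}^n$ and $x\in Q_{v,m}$, $$|\lambda_{v,m}|\le c\,2^{-v(\alpha(x)+\frac n2)}|Q_{v,m}|^{\tau(x)}\,\|\lambda\|_{\mathfrak{b}^{\alpha(\cdot),\tau(\cdot)}_{p(\cdot),q(\cdot)}}\,\|\chi_{v,m}\|_{p(\cdot)}^{-1}.$$
   Context: $g^\pm$: essential sup/inf. $\mathcal{P}_0$: measurable $p:\mathbb{R}^n\to(0,\infty)$ with $p^->0$. $g\in C^{\log}_{\mathrm{loc}}$: $|g(x)-g(y)|\le c/\log(e+1/|x-y|)$; $g\in C^{\log}$: additionally $|g(x)-g_\infty|\le c/\log(e+|x|)$. $\mathcal{P}_0^{\log}=\{p\in\mathcal{P}_0:1/p\in C^{\log}\}$. $\|f\|_{p(\cdot)}=\inf\{\lambda>0:\int|f/\lambda|^{p(x)}dx\le1\}$; $\|(f_v)\|_{\ell^{q(\cdot)}(L^{p(\cdot)})}=\inf\{\mu>0:\sum_v\inf\{\lambda_v>0:\int|f_v(x)/(\mu\lambda_v^{1/q(x)})|^{p(x)}dx\le1\}\le1\}$. Dyadic cubes $Q_{v,m}=\{x:m_i\le2^vx_i<m_i+1\}$, $\chi_{v,m}=\chi_{Q_{v,m}}$,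 $\mathcal{Q}$ the set of dyadic cubes, $v_P=-\log_2l(P)$, $v_P^+=\max(v_P,0)$. For complex sequences $\lambda=\{\lambda_{v,m}:v\in\mathbb{N}_0,m\in\mathbb{Z}^n\}$, $\|\lambda\|_{\mathfrak{b}^{\alpha(\cdot),\tau(\cdot)}_{p(\cdot),q(\cdot)}}=\sup_{P\in\mathcal{Q}}\Big\|\Big(|P|^{-\tau(\cdot)}\chi_P\sum_{m\in\mathbb{Z}^n}2^{v(\alpha(\cdot)+n/2)}\lambda_{v,m}\chi_{v,m}\Big)_{v\ge v_P^+}\Big\|_{\ell^{q(\cdot)}(L^{p(\cdot)})}$ and $\mathfrak{b}^{\alpha(\cdot),\tau(\cdot)}_{p(\cdot),q(\cdot)}$ is the set of $\lambda$ where this is finite. *)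

(* Defs.v *)
From mathcomp Require Import all_boot all_order all_algebra.
From mathcomp Require Import all_classical all_reals all_analysis.
From mathcomp Require Import complex.
Import Order.TTheory GRing.Theory Num.Theory.

Set Implicit Arguments.
Unset Strict Implicit.
Unset Printing Implicit Defensive.

Local Open Scope classical_set_scope.
Local Open Scope ring_scope.

(* Lebesgue integral over R^n of a nonnegative extended-real function,
   written as the iterated one-dimensional Lebesgue integral (by Tonelli this
   is the n-dimensional Lebesgue integral for every measurable integrand). *)
Fixpoint iint (R : realType) (n : nat) : (n.-tuple R -> \bar R) -> \bar R :=
  match n return (n.-tuple R -> \bar R) -> \bar R with
  | 0 => fun f => f [tuple]
  | k.+1 => fun f =>
      (\int[@lebesgue_measure R]_(t in setT)
          iint (fun y : k.-tuple R => f (cons_tuple t y)))%E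
  end.

Definition lebn (R : realType) (n : nat) (A : set (n.-tuple R)) : \bar R :=
  iint (fun x => (\1_A x)%:E).

Definition nullset (R : realType) (n : nat) (A : set (n.-tuple R)) : Prop :=
  exists B : set (n.-tuple R), measurable B /\ A `<=` B /\ lebn B = 0%E.

Definition esssup (R : realType) (n : nat) (f : n.-tuple R -> R) : \bar R :=
  ereal_inf [set y : \bar R | nullset [set x | y < (f x)%:E]%E].
Definition essinf (R : realType) (n : nat) (f : n.-tuple R -> R) : \bar R :=
  ereal_sup [set y : \bar R | nullset [set x | ((f x)%:E < y)%E]].

Definition enorm (R : realType) (n : nat) (x : n.-tuple R) : R :=
  Num.sqrt (\sum_(i < n) (tnth x i) ^+ 2).

Definition tsub (R : realType) (n : nat) (x y : n.-tuple R) : n.-tuple R :=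
  [tuple tnth x i - tnth y i | i < n].

Definition Clog_loc (R : realType) (n : nat) (g : n.-tuple R -> R) : Prop :=
  exists c : R, forall x y : n.-tuple R,
    `|g x - g y| <= c / ln (expR 1 + (enorm (tsub x y))^-1).

Definition Clog (R : realType) (n : nat) (g : n.-tuple R -> R) : Prop :=
  exists c : R, exists ginf : R,
    (forall x y : n.-tuple R,
      `|g x - g y| <= c / ln (expR 1 + (enorm (tsub x y))^-1)) /\
    (forall x : n.-tuple R, `|g x - ginf| <= c / ln (expR 1 + enorm x)).

Definition P0 (R : realType) (n : nat) (p : n.-tuple R -> R) : Prop :=
  measurable_fun setT p /\ (forall x, 0 < p x) /\ (0 < essinf p)%E.

Definition P0log (R : realType) (n : nat) (p : n.-tuple R -> R) : Prop :=
  P0 p /\ Clog (fun x => (p x)^-1).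

Definition dcube (R : realType) (n : nat) (j : int) (m : n.-tuple int)
  : set (n.-tuple R) :=
  [set x | forall i : 'I_n,
     (tnth m i)%:~R <= (2 : R) ^ j * tnth x i < (tnth m i)%:~R + 1].

Definition dvol (R : realType) (n : nat) (j : int) : R := ((2 : R) ^ (- j)) ^+ n.

Definition vplus (j : int) : nat := `|Num.max j 0|%N.

Definition pnorm (R : realType) (n : nat) (p : n.-tuple R -> R)
  (f : n.-tuple R -> R) : \bar R :=
  ereal_inf [set l%:E | l in [set l : R | 0 < l /\
     (iint (fun x => ((`|f x / l|) `^ (p x))%:E) <= 1)%E]].

Definition lqLp_inner (R : realType) (n : nat) (p q : n.-tuple R -> R)
  (f : n.-tuple R -> R) (mu : R) : \bar R :=
  ereal_inf [set l%:E | l in [set l : R | 0 < l /\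
     (iint (fun x => ((`|f x / (mu * l `^ (q x)^-1)|) `^ (p x))%:E) <= 1)%E]].

Definition lqLp_norm (R : realType) (n : nat) (p q : n.-tuple R -> R)
  (f : nat -> n.-tuple R -> R) (v0 : nat) : \bar R :=
  ereal_inf [set mu%:E | mu in [set mu : R | 0 < mu /\
     (\sum_(v0 <= v <oo) lqLp_inner p q (f v) mu <= 1)%E]].

Definition cseq (R : realType) (n : nat) := nat -> n.-tuple int -> R[i].

Definition cabs (R : realType) (z : R[i]) : R := ComplexField.Normc.normc z.

(* the function |P|^{-tau(x)} chi_P(x) sum_m 2^{v(alpha(x)+n/2)} lambda_{v,m} chi_{v,m}(x),
   taken in absolute value (only its modulus enters the quasinorm) *)
Definition bfun (R : realType) (n : nat) (alpha tau : n.-tuple R -> R)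
  (lam : cseq R n) (j : int) (k : n.-tuple int) (v : nat) (x : n.-tuple R) : R :=
  (@dvol R n j) `^ (- tau x) * \1_(dcube j k) x *
  cabs (\sum_(m \in [set: n.-tuple int])
          real_complex R ((2 : R) `^ (v%:R * (alpha x + n%:R / 2))) * lam v m
          * real_complex R (\1_(@dcube R n v%:Z m) x)).

Definition bnorm (R : realType) (n : nat) (alpha tau p q : n.-tuple R -> R)
  (lam : cseq R n) : \bar R :=
  ereal_sup [set lqLp_norm p q (bfun alpha tau lam jk.1 jk.2) (vplus jk.1)
            | jk in [set: int * n.-tuple int]].

(* Main.v *)
Require Import Defs.
From mathcomp Require Import all_boot all_order all_algebra.
From mathcomp Require Import all_classical all_reals all_analysis.
From mathcomp Require Import complex.
From mathcomp Require Import ring lra measurable_realfun.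

Import Order.TTheory GRing.Theory Num.Theory.
Local Open Scope classical_set_scope.
Local Open Scope ring_scope.

Section H.
Context {R : realType}.
Lemma int_le (f g : R -> \bar R) : (forall x, (0 <= f x)%E) -> (forall x, (f x <= g x)%E) ->
  (\int[@lebesgue_measure R]_(t in setT) f t <= \int[@lebesgue_measure R]_(t in setT) g t)%E.
Proof.
move=> f0 fg.
have g0 : forall x, (0 <= g x)%E by move=> x; exact: le_trans (f0 x) (fg x).
rewrite !ge0_integralTE//; apply: ereal_sup_le => _ [h hf <-]; exists h => //.
by move=> x; exact: le_trans (hf x) (fg x).
Qed.

Lemma iint_ge0 n (f : n.-tuple R -> \bar R) : (forall x, (0 <= f x)%E) -> (0 <= iint f)%E.
Proof.
elim: n f => [|k IH] f f0 /=; first exact: f0.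
apply: integral_ge0 => t _; exact: IH.
Qed.

Lemma iint_le n (f g : n.-tuple R -> \bar R) : (forall x, (0 <= f x)%E) ->
  (forall x, (f x <= g x)%E) -> (iint f <= iint g)%E.
Proof.
elim: n f g => [|k IH] f g f0 fg /=; first exact: fg.
apply: int_le => t; first exact: iint_ge0.
exact: IH.
Qed.

Definition I1 (v : nat) (m0 : int) : set R :=
  [set t : R | m0%:~R <= 2 ^+ v * t < m0%:~R + 1].

Lemma dcube_cons n (v : nat) (m0 : int) (m' : n.-tuple int) (t : R) (y : n.-tuple R) :
  dcube v%:Z [tuple of m0 :: m'] [tuple of t :: y] <-> I1 v m0 t /\ dcube v%:Z m' y.
Proof.
split.
  move=> H; split; first by have := H ord0; rewrite !tnth0.
  by move=> i; have := H (lift ord0 i); rewrite !tnthS.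
move=> [H1 H2] i; case: (unliftP ord0 i) => [j ->|->].
  by rewrite !tnthS; exact: H2.
by rewrite !tnth0.
Qed.

Lemma I1E (v : nat) (m0 : int) : I1 v m0 =
  [set` Interval (BLeft (m0%:~R / 2 ^+ v)) (BLeft ((m0%:~R + 1) / 2 ^+ v))].
Proof.
have h : (0 : R) < 2 ^+ v by rewrite exprn_gt0.
apply/funext => t; apply/propext; rewrite /I1 /= in_itv /=.
by rewrite ler_pdivrMr // ltr_pdivlMr // ![t * _]mulrC.
Qed.

Lemma measure_I1 (v : nat) (m0 : int) :
  lebesgue_measure (I1 v m0) = ((2 ^+ v)^-1 : R)%:E.
Proof.
rewrite I1E lebesgue_measure_itv /=.
have h : (0 : R) < 2 ^+ v by rewrite exprn_gt0.
rewrite lte_fin ltr_pM2r ?invr_gt0 // ltrDl ltr01 -EFinD; congr EFin.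
by rewrite -mulrBl addrAC subrr add0r mul1r.
Qed.


Lemma iint_cube n (v : nat) (m : n.-tuple int) (a : R) : 0 <= a ->
  iint (fun x => (a * \1_(@dcube R n v%:Z m) x)%:E) = (a * ((2 ^+ v)^-1) ^+ n)%:E.
Proof.
elim: n m a => [|k IH] m a a0 /=.
  rewrite indicE mem_set ?expr0 //.
  by move=> i; case: i.
case/tupleP: m => m0 m'.
have E : forall (t : R) (y : k.-tuple R), (\1_(@dcube R k.+1 v%:Z [tuple of m0 :: m']) (cons_tuple t y) : R)
   = \1_(I1 v m0) t * \1_(@dcube R k v%:Z m') y.
  move=> t y; have := dcube_cons k v m0 m' t y.
  case: (pselect (I1 v m0 t)) => h1; case: (pselect (dcube v%:Z m' y)) => h2 eq.
  - by rewrite !indicE !mem_set ?mulr1 //; apply/eq.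
  - by rewrite !indicE (@memNset _ _ y) ?mulr0 // (@memNset _ _ (cons_tuple t y)) // => /eq [].
  - by rewrite !indicE (@memNset _ _ t) ?mul0r // (@memNset _ _ (cons_tuple t y)) // => /eq [].
  - by rewrite !indicE (@memNset _ _ t) ?mul0r // (@memNset _ _ (cons_tuple t y)) // => /eq [].
transitivity (\int[@lebesgue_measure R]_(t in setT)
   ((a * ((2 ^+ v)^-1) ^+ k)%:E * (\1_(I1 v m0) t)%:E))%E.
  apply: eq_integral => t _.
  rewrite (_ : (fun y => _) = fun y => ((a * \1_(I1 v m0) t) * \1_(@dcube R k v%:Z m') y)%:E).
    by rewrite IH ?mulr_ge0 // -EFinM; congr EFin; rewrite mulrAC.
  by apply/funext => y; rewrite E mulrA.
rewrite ge0_integralZl_EFin //; last 2 first.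
- by apply/measurable_EFinP; apply: measurable_indic; rewrite I1E; exact: measurable_itv.
- by rewrite mulr_ge0 // exprn_ge0 // invr_ge0 exprn_ge0.
rewrite integral_indic; last by rewrite I1E; exact: measurable_itv.
rewrite setIT.
  transitivity ((a * ((2 ^+ v)^-1) ^+ k)%:E * ((2 ^+ v)^-1 : R)%:E)%E.
    by congr (_ * _)%E; exact: measure_I1.
  rewrite -EFinM exprS; congr EFin; ring.
exact: measurableT.
Qed.

Lemma cube_coord n (v : nat) (m : n.-tuple int) (x y : n.-tuple R) (i : 'I_n) :
  dcube v%:Z m x -> dcube v%:Z m y -> `|tnth x i - tnth y i| < (2 ^+ v)^-1.
Proof.
move=> hx hy; have := hx i; have := hy i; rewrite /= => /andP[a1 a2] /andP[b1 b2].
have h : (0 : R) < 2 ^+ v by rewrite exprn_gt0.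
rewrite -[X in _ < X]mulr1 ltr_pdivlMl //.
rewrite (_ : 2 ^+ v * `|_| = `|2 ^+ v * (tnth x i - tnth y i)|); last by rewrite normrM ger0_norm ?ltW.
rewrite ltr_norml mulrBr.
move: a1 a2 b1 b2; set X := 2 ^+ v * tnth x i; set Y := 2 ^+ v * tnth y i; set M := (tnth m i)%:~R.
move=> a1 a2 b1 b2; apply/andP; split; lra.
Qed.

Lemma Lge1 (z : R) : 0 <= z -> 1 <= ln (expR 1 + z).
Proof.
move=> z0; rewrite -{1}(expRK 1) ler_ln ?posrE ?expR_gt0 ?lerDl //.
by rewrite ltr_wpDr ?expR_gt0.
Qed.

Definition Mc (n : nat) : R := n%:R + 2 / ln 2.

Lemma Mc_ge0 n : 0 <= Mc n.
Proof. by rewrite /Mc addr_ge0 // divr_ge0 // ln_ge0 // ler1n. Qed.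

Lemma logh n (g : n.-tuple R -> R) (c : R)
  (Hg : forall x y, `|g x - g y| <= c / ln (expR 1 + (enorm (tsub x y))^-1))
  (v : nat) (m : n.-tuple int) (x y : n.-tuple R) :
  dcube v%:Z m x -> dcube v%:Z m y -> v%:R * `|g x - g y| <= c * Mc n.
Proof.
move=> hx hy.
have Lp : forall a b : n.-tuple R, 1 <= ln (expR 1 + (enorm (tsub a b))^-1).
  by move=> a b; apply: Lge1; rewrite invr_ge0 sqrtr_ge0.
have c0 : 0 <= c.
  have := Hg x x; rewrite subrr normr0 => h.
  have := Lp x x => hL.
  by move: h; rewrite ler_pdivlMr ?mul0r // (lt_le_trans ltr01).
set d := enorm (tsub x y).
have d2 : d ^+ 2 = \sum_(i < n) (tnth x i - tnth y i) ^+ 2.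
  rewrite /d /enorm sqr_sqrtr; last by apply: sumr_ge0 => i _; exact: sqr_ge0.
  by apply: eq_bigr => i _; rewrite /tsub tnth_mktuple.
have w0 : (0 : R) < (2 ^+ v)^-1 by rewrite invr_gt0 exprn_gt0.
have dle : d ^+ 2 <= n%:R * ((2 ^+ v)^-1) ^+ 2.
  rewrite d2; apply: (@le_trans _ _ (\sum_(i < n) ((2 ^+ v)^-1) ^+ 2)); last first.
    by rewrite sumr_const card_ord mulr_natl.
  apply: ler_sum => i _.
  rewrite -real_normK ?num_real // !expr2.
  have hc := cube_coord n v m x y i hx hy.
  by apply: ler_pM; rewrite ?normr_ge0 ?ltW.
have d0 : 0 <= d by rewrite sqrtr_ge0.
have [dz|dpos] := eqVneq d 0.
  have H0 : \sum_(i < n) (tnth x i - tnth y i) ^+ 2 = 0 by rewrite -d2 dz expr0n.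
  move/eqP: H0; rewrite psumr_eq0 => [/allP Hall|i _]; last exact: sqr_ge0.
  have xy : x = y.
    apply: eq_from_tnth => i; have := Hall i (mem_index_enum i).
    by rewrite implyTb sqrf_eq0 subr_eq0 => /eqP.
  by rewrite xy subrr normr0 mulr0 mulr_ge0 // Mc_ge0.
have dp : 0 < d by rewrite lt_neqAle eq_sym dpos d0.
set L := ln (expR 1 + d^-1).
have L1 : 1 <= L by exact: Lp.
have hg : `|g x - g y| <= c / L by exact: Hg.
have vL : v%:R <= Mc n * L.
  have [vn|nv] := ltnP v n.
    apply: (@le_trans _ _ (Mc n)).
      rewrite /Mc; apply: (@le_trans _ _ n%:R); first by rewrite ler_nat ltnW.
      by rewrite lerDl divr_ge0 // ln_ge0 // ler1n.
    by rewrite -{1}(mulr1 (Mc n)) ler_wpM2l // Mc_ge0.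
  have n0 : (0 < n)%N.
    rewrite lt0n; apply/negP => /eqP n0.
    move: dle; rewrite n0 mul0r => dle.
    have : d ^+ 2 == 0 by rewrite eq_le dle sqr_ge0.
    by rewrite sqrf_eq0 (negbTE dpos).
  have l2 : 0 < ln (2 : R) by rewrite ln_gt0 // ltr1n.
  have LL : v%:R * ln 2 / 2 <= L.
    have h1 : ln (d^-1) <= L by rewrite /L ler_ln ?posrE ?invr_gt0 // ?lerDr ?expR_ge0 // ltr_pwDr ?expR_gt0 // invr_gt0.
    apply: le_trans h1; rewrite lnV ?posrE //.
    have h2 : ln (d ^+ 2) <= ln (n%:R * ((2 ^+ v)^-1) ^+ 2).
      by rewrite ler_ln ?posrE ?exprn_gt0 ?mulr_gt0 ?exprn_gt0 // ltr0n.
    rewrite lnXn // lnM ?posrE ?ltr0n ?exprn_gt0 // lnXn // lnV ?posrE ?exprn_gt0 // lnXn // in h2.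
    have h3 : ln (n%:R : R) <= v%:R * ln 2.
      rewrite mulr_natl -lnXn // ler_ln ?posrE ?ltr0n ?exprn_gt0 //.
      by rewrite -natrX ler_nat (leq_trans nv) // ltnW // ltn_expl.
    have {}h2 : 2%:R * ln d <= ln n%:R + 2%:R * (- (v%:R * ln (2 : R))).
      by move: h2; rewrite -[ln d *+ 2]mulr_natl -[_ *- v *+ 2]mulr_natl -[ln 2 *+ v]mulr_natl.
    move: h2 h3; set b := v%:R * ln (2 : R); rewrite -/b; move=> h2 h3.
    lra.
  rewrite /Mc.
  have u2 : 2 / ln 2 * ln 2 = (2 : R) by rewrite mulfVK // gt_eqF.
  have u0 : 0 < 2 / ln (2 : R) by rewrite divr_gt0.
  have n0' : (0 : R) <= n%:R by rewrite ler0n.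
  move: u2 u0 LL; set u := 2 / ln (2 : R); set b := ln (2 : R); move=> u2 u0 LL.
  have L0 : 0 <= L by exact: le_trans ler01 L1.
  have k1 : 0 <= u * (L - v%:R * b / 2) by apply: mulr_ge0; [exact: ltW | rewrite subr_ge0].
  have k2 : 0 <= n%:R * L by rewrite mulr_ge0.
  have k3 : u * (v%:R * b / 2) = v%:R.
    rewrite (_ : u * (v%:R * b / 2) = (u * b) * v%:R / 2); last by ring.
    by rewrite u2 mulrAC divff ?mul1r // pnatr_eq0.
  rewrite mulrDl; lra.
apply: (@le_trans _ _ (v%:R * (c / L))); first by rewrite ler_wpM2l ?ler0n.
apply: (@le_trans _ _ ((Mc n * L) * (c / L))); first by rewrite ler_wpM2r ?divr_ge0 // (le_trans ler01).
rewrite mulrC mulrA mulrAC divfK // ?gt_eqF // (lt_le_trans ltr01) //.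
Qed.

Lemma dcube_uniq n (v : nat) (m m' : n.-tuple int) (y : n.-tuple R) :
  dcube v%:Z m y -> dcube v%:Z m' y -> m = m'.
Proof.
move=> h h'; apply: eq_from_tnth => i.
have := h i; have := h' i; rewrite /= => /andP[a1 a2] /andP[b1 b2].
apply/eqP; rewrite eq_le -!ltzD1 -!(ltr_int R) !intrD.
by apply/andP; split; [exact: le_lt_trans b1 a2 | exact: le_lt_trans a1 b2].
Qed.

Lemma cabs_rc (a : R) (z : R[i]) : 0 <= a -> cabs (real_complex R a * z) = a * cabs z.
Proof.
move=> a0; rewrite /cabs ComplexField.Normc.normcM; congr (_ * _).
by rewrite /ComplexField.Normc.normc /= expr0n /= addr0 sqrtr_sqr ger0_norm.
Qed.

Lemma bfun_in n (alpha tau : n.-tuple R -> R) (lam : cseq R n) (v : nat) (m : n.-tuple int)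
  (y : n.-tuple R) : dcube v%:Z m y ->
  bfun alpha tau lam v%:Z m v y =
  @dvol R n v%:Z `^ (- tau y) * (2 `^ (v%:R * (alpha y + n%:R / 2)) * cabs (lam v m)).
Proof.
move=> hy; rewrite /bfun indicE mem_set // mulr1; congr (_ * _).
rewrite -(fsbig_widen [set m]) //; last first.
  move=> m' [_ /= mm']; rewrite /= indicE memNset ?mulr0 //.
  by move=> h'; apply: mm'; apply: dcube_uniq h' hy.
rewrite fsbig_set1 indicE mem_set // -mulrA.
by rewrite (_ : real_complex R 1%:R = 1) // mulr1 cabs_rc // powR_ge0.
Qed.

Lemma bfun_ge0 n (alpha tau : n.-tuple R -> R) (lam : cseq R n) j k v y :
  0 <= bfun alpha tau lam j k v y.
Proof.
rewrite /bfun mulr_ge0 // ?mulr_ge0 ?powR_ge0 //.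
by rewrite /cabs /ComplexField.Normc.normc; case: (\sum_(_ \in _) _) => a b; exact: sqrtr_ge0.
Qed.

Lemma dvolE n (v : nat) : @dvol R n v%:Z = ((2 ^+ v)^-1) ^+ n.
Proof. by rewrite /dvol -invr_expz. Qed.

Lemma dvol_gt0 n (v : nat) : 0 < @dvol R n v%:Z.
Proof. by rewrite dvolE exprn_gt0 // invr_gt0 exprn_gt0. Qed.

Lemma dvol_pow n (v : nat) (r : R) : @dvol R n v%:Z `^ r = 2 `^ (- (v%:R * n%:R) * r).
Proof.
rewrite powRrM powRN -natrM powR_mulrn ?ler0n // dvolE exprVn exprM.
by rewrite -exprVn.
Qed.

Lemma powR2D (r s : R) : 2 `^ (r + s) = 2 `^ r * 2 `^ s.
Proof. by rewrite powRD // pnatr_eq0 implybT. Qed.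

Lemma vplus_nat (v : nat) : vplus v%:Z = v.
Proof. by rewrite /vplus (max_idPl _). Qed.

Lemma lqLp_inner_ge0 n (p q : n.-tuple R -> R) f mu : (0 <= lqLp_inner p q f mu)%E.
Proof. by apply: le_ereal_inf_tmp => _ [l [l0 _] <-]; rewrite lee_fin ltW. Qed.

Lemma lqLp_norm_ge0 n (p q : n.-tuple R -> R) f v0 : (0 <= lqLp_norm p q f v0)%E.
Proof. by apply: le_ereal_inf_tmp => _ [l [l0 _] <-]; rewrite lee_fin ltW. Qed.

Lemma pnorm_ge0 n (p : n.-tuple R -> R) f : (0 <= pnorm p f)%E.
Proof. by apply: le_ereal_inf_tmp => _ [l [l0 _] <-]; rewrite lee_fin ltW. Qed.

Lemma term_le n (p q : n.-tuple R -> R) f mu (v : nat) :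
  (lqLp_inner p q (f v) mu <= \sum_(v <= w <oo) lqLp_inner p q (f w) mu)%E.
Proof.
have := @nneseries_lim_ge R (fun w => lqLp_inner p q (f w) mu) xpredT v v.+1.
rewrite big_nat1; apply => k _ _; exact: lqLp_inner_ge0.
Qed.

Lemma Clog_bound n (g : n.-tuple R -> R) : Clog g -> exists G : R, forall y, g y <= G.
Proof.
case=> c [g0 [_ H2]]; exists (`|g0| + `|c|) => y.
have := H2 y.
have L1' : 1 <= ln (expR 1 + enorm y) by apply: Lge1; rewrite sqrtr_ge0.
move=> h.
have h2 : c / ln (expR 1 + enorm y) <= `|c|.
  rewrite ler_pdivrMr ?(lt_le_trans ltr01) //.
  apply: le_trans (ler_norm c) _; rewrite -{1}(mulr1 `|c|) ler_wpM2l //.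
have h3 := ler_norm (g y - g0); have h4 := ler_norm g0.
lra.
Qed.

Lemma cabs_ge0 (z : R[i]) : 0 <= cabs z.
Proof. by rewrite /cabs /ComplexField.Normc.normc; case: z => a b; exact: sqrtr_ge0. Qed.

Lemma lin_aux (e A B A' B' : R) : A <= A' -> B <= B' -> e + A + B <= (A' + B') + e.
Proof. move=> *; lra. Qed.
End H.

Theorem lemma3p9 (R : realType) (n : nat) (alpha tau p q : n.-tuple R -> R) :
  Clog_loc alpha -> Clog_loc tau -> (0 <= essinf tau)%E ->
  P0log p -> P0log q -> (0 < esssup q)%E -> (esssup q < +oo)%E ->
  exists c : R, 0 < c /\
    forall lam : cseq R n, (bnorm alpha tau p q lam < +oo)%E ->
    forall (v : nat) (m : n.-tuple int) (x : n.-tuple R),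
      dcube v%:Z m x ->
      cabs (lam v m) <=
        c * (2 : R) `^ (- (v%:R * (alpha x + n%:R / 2)))
          * (@dvol R n v%:Z) `^ (tau x)
          * fine (bnorm alpha tau p q lam)
          * (fine (pnorm p (\1_(@dcube R n v%:Z m))))^-1.
Proof.
move=> [ca Ha] [ct Ht] _ [[_ [ppos _]] Hp] [[_ [qpos _]] Hq] _ _.
have [G HG] := Clog_bound _ _ Hp.
have [Q1 HQ] := Clog_bound _ _ Hq.
set K := (n%:R * ct + ca) * @Mc R n.
set C1 : R := 2 `^ K.
set C2 : R := 2 `^ Q1.
have C1p : 0 < C1 by rewrite powR_gt0.
have C2p : 0 < C2 by rewrite powR_gt0.
exists (C1 * C2); split; first by rewrite mulr_gt0.
move=> lam Bfin v m x hx.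
set B := bnorm alpha tau p q lam.
set P := @dcube R n v%:Z m.
set Ne := pnorm p (\1_P).
set f := bfun alpha tau lam v%:Z m.
set L := lqLp_norm p q f v.
set E := fun y => v%:R * n%:R * tau y + v%:R * (alpha y + n%:R / 2).
have hLB : (L <= B)%E.
  apply: ereal_sup_ubound; exists (v%:Z, m) => //=.
have L0 : (0 <= L)%E by apply: lqLp_norm_ge0.
have B0 : (0 <= B)%E by apply: le_trans L0 hLB.
have Ne0 : (0 <= Ne)%E by apply: pnorm_ge0.
have FE : forall y, 2 `^ (- (v%:R * (alpha y + n%:R / 2))) * @dvol R n v%:Z `^ (tau y)
    = (2 `^ E y)^-1.
  move=> y; rewrite dvol_pow -powR2D -powRN; congr (2 `^ _); rewrite /E; ring.
rewrite -(mulrA (C1 * C2)) FE.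
have [a0|an0] := eqVneq (cabs (lam v m)) 0.
  rewrite a0 mulr_ge0 // ?invr_ge0 ?fine_ge0 // mulr_ge0 // ?fine_ge0 //.
  by rewrite mulr_ge0 ?invr_ge0 ?powR_ge0 // mulr_ge0 // ltW.
set a := cabs (lam v m).
have ap : 0 < a by rewrite lt_neqAle eq_sym an0 cabs_ge0.
have volp : 0 < @dvol R n v%:Z := dvol_gt0 n v.
have Gp : 0 < G by apply: lt_le_trans (HG x); rewrite invr_gt0.
set rho := G^-1.
have prho : forall y, rho <= p y.
  by move=> y; rewrite /rho -[p y]invrK lef_pV2 ?posrE ?invr_gt0 ?ppos.
set l0 := Num.min 1 (@dvol R n v%:Z `^ G).
have l0p : 0 < l0 by rewrite lt_min ltr01 powR_gt0.
have hl0 : (l0%:E <= Ne)%E.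
  apply: le_ereal_inf_tmp => _ [l [lp hint] <-]; rewrite lee_fin.
  have [l1|l1] := lerP 1 l; first by rewrite ge_min l1.
  rewrite ge_min; apply/orP; right.
  have key : ((l^-1 `^ rho * @dvol R n v%:Z)%:E <= 1)%E.
    apply: le_trans hint.
    rewrite dvolE -(iint_cube n v m) ?powR_ge0 //.
    apply: iint_le => y; first by rewrite lee_fin mulr_ge0 ?powR_ge0 // indicE ler0n.
    rewrite lee_fin; case: (pselect (P y)) => Py.
      have li0 : 0 <= l^-1 by rewrite invr_ge0 ltW.
      rewrite indicE mem_set // /= mulr1 div1r ger0_norm //.
      by apply: ler_powR; [rewrite invf_ge1 // ltW | exact: prho].
    by rewrite indicE memNset // mulr0 powR_ge0.
  have li : l^-1 `^ rho = (l `^ rho)^-1.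
    by rewrite -powR_inv1 ?ltW // -powRrM mulN1r powRN.
  rewrite lee_fin li ler_pdivrMl ?powR_gt0 // mulr1 in key.
  have : @dvol R n v%:Z `^ G <= (l `^ rho) `^ G.
    have G0 := ltW Gp; have v0 := ltW volp; have r0 := powR_ge0 l rho.
    by apply: ge0_ler_powR => //; rewrite ?nnegrE.
  by rewrite -powRrM mulVf ?gt_eqF // powRr1 // ltW.
have hE : forall y, P y -> 2 `^ E x <= C1 * 2 `^ E y.
  move=> y Py; rewrite /C1 -powR2D; apply: ler_powR; first by rewrite ler1n.
  have h1 := logh _ _ _ Ha _ _ _ _ hx Py.
  have h2 := logh _ _ _ Ht _ _ _ _ hx Py.
  have t1 : v%:R * (tau x - tau y) <= v%:R * `|tau x - tau y| by rewrite ler_wpM2l ?ler0n ?ler_norm.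
  have a1 : v%:R * (alpha x - alpha y) <= v%:R * `|alpha x - alpha y| by rewrite ler_wpM2l ?ler0n ?ler_norm.
  have t2 : n%:R * (v%:R * (tau x - tau y)) <= n%:R * (ct * @Mc R n).
    by rewrite ler_wpM2l ?ler0n // (le_trans t1 h2).
  rewrite (_ : E x = E y + n%:R * (v%:R * (tau x - tau y)) + v%:R * (alpha x - alpha y)); last by rewrite /E; ring.
  rewrite (_ : K = n%:R * (ct * @Mc R n) + ca * @Mc R n); last by rewrite /K; ring.
  exact: lin_aux t2 (le_trans a1 h1).
have adm : forall mu, 0 < mu -> (\sum_(v <= w <oo) lqLp_inner p q (f w) mu <= 1)%E ->
    (Ne <= (C1 * C2 * mu / (a * 2 `^ E x))%:E)%E.
  move=> mu mup hs.
  have h1 : (lqLp_inner p q (f v) mu < 2%:E)%E.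
    by apply: le_lt_trans (le_trans (term_le _ _ _ _ _ v) hs) _; rewrite lte_fin ltr1n.
  have [_ [l [lp hl] <-] l2] := ereal_inf_lt h1.
  rewrite lte_fin in l2.
  have FXp : 0 < a * 2 `^ E x by rewrite mulr_gt0 // powR_gt0.
  apply: ereal_inf_lbound; exists (C1 * C2 * mu / (a * 2 `^ E x)) => //; split.
    by rewrite divr_gt0 // !mulr_gt0.
  apply: le_trans hl; apply: iint_le => y; first by rewrite lee_fin powR_ge0.
  rewrite lee_fin; case: (pselect (P y)) => Py; last first.
    by rewrite indicE memNset // mul0r normr0 powR0 ?gt_eqF ?ppos // powR_ge0.
  apply: ge0_ler_powR; rewrite ?nnegrE ?normr_ge0 ?(ltW (ppos y)) //.
  have lqp : 0 < l `^ (q y)^-1 by rewrite powR_gt0.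
  have lqC : l `^ (q y)^-1 <= C2.
    apply: (@le_trans _ _ (2 `^ (q y)^-1)).
      by apply: ge0_ler_powR; rewrite ?nnegrE ?invr_ge0 ?ltW ?qpos.
    by apply: ler_powR; [rewrite ler1n | exact: HQ].
  have den : 0 < C1 * C2 * mu by rewrite !mulr_gt0.
  rewrite indicE mem_set // /= div1r invf_div ger0_norm; last exact: divr_ge0 (ltW FXp) (ltW den).
  rewrite ger0_norm; last exact: divr_ge0 (bfun_ge0 _ _ _ _ _ _ _ _) (mulr_ge0 (ltW mup) (ltW lqp)).
  rewrite /f bfun_in // dvol_pow mulrA -powR2D.
  rewrite (_ : - (v%:R * n%:R) * - tau y + v%:R * (alpha y + n%:R / 2) = E y); last by rewrite /E; ring.
  have Eyp : 0 < 2 `^ E y by rewrite powR_gt0.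
  rewrite ler_pdivrMr ?mulr_gt0 // mulrAC ler_pdivlMr ?mulr_gt0 //.
  rewrite (_ : a * 2 `^ E x * (mu * l `^ (q y)^-1) = (a * mu) * (2 `^ E x * l `^ (q y)^-1)); last by ring.
  rewrite (_ : 2 `^ E y * a * (C1 * C2 * mu) = (a * mu) * ((C1 * 2 `^ E y) * C2)); last by ring.
  apply: ler_wpM2l; first exact: mulr_ge0 (ltW ap) (ltW mup).
  by apply: ler_pM; [exact: powR_ge0 | exact: powR_ge0 | exact: hE | exact: lqC].
have Lfin : (L < +oo)%E by apply: le_lt_trans hLB Bfin.
have [_ [mu0 [mu0p hs0] <-] _] := ereal_inf_lt Lfin.
have NeF : Ne \is a fin_num.
  by rewrite ge0_fin_numE // (le_lt_trans (adm mu0 mu0p hs0)) ?ltry.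
set N := fine Ne.
have NeE : Ne = N%:E by rewrite /N fineK.
have Np : 0 < N by rewrite -lte_fin -NeE; exact: lt_le_trans hl0; rewrite lte_fin.
have BF : B \is a fin_num by rewrite ge0_fin_numE.
set b := fine B.
have BE : B = b%:E by rewrite /b fineK.
have hL : ((a * 2 `^ E x * N / (C1 * C2))%:E <= L)%E.
  apply: le_ereal_inf_tmp => _ [mu [mup hs] <-]; rewrite lee_fin.
  have := adm mu mup hs; rewrite NeE lee_fin => h.
  rewrite ler_pdivrMr ?mulr_gt0 //.
  rewrite ler_pdivlMr ?mulr_gt0 ?powR_gt0 // in h.
  rewrite (_ : a * 2 `^ E x * N = N * (a * 2 `^ E x)); last by ring.
  by rewrite (_ : mu * (C1 * C2) = C1 * C2 * mu) //; ring.
have hab : a * 2 `^ E x * N / (C1 * C2) <= b.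
  by rewrite -lee_fin -BE; exact: le_trans hL hLB.
have FXp : 0 < 2 `^ E x by rewrite powR_gt0.
rewrite (_ : C1 * C2 * (2 `^ E x)^-1 * b / N = (C1 * C2 * b) / (2 `^ E x * N)); last first.
  by field; rewrite ?gt_eqF.
rewrite ler_pdivlMr ?mulr_gt0 //.
rewrite ler_pdivrMr ?mulr_gt0 // in hab.
by rewrite mulrA [C1 * C2 * b]mulrC.
Qed.
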